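(* Let $p>1$. For $\beta>-1$, $\beta\ne0$, let $\eta_1(\beta)\in(0,1)$ be the root of $\eta^\beta=\dfrac{1}{1+\beta(\eta+1)}$ and $$\psi_0(\beta,\eta)=\dfrac{(1+\eta^{\beta+1})^{1/\beta}}{(1+\eta)^{(\beta+1)/\beta}}+\dfrac{(\beta+1)^{(\beta+1)/\beta}}{\beta}\left[\dfrac1{1+\eta^{\beta+1}}-\dfrac1{1+\eta}\right].$$ Then $$\max_{0\le\eta\le\eta_1(1/(p-1))}\psi_0\!\left(\frac1{p-1},\eta\right)=\max_{0\le\eta\le\eta_1(-1/p)}\psi_0\!\left(-\frac1p,\eta\right).$$ *)

(* Defs.v *)
From HB Require Import structures.
From mathcomp Require Import all_boot all_order all_algebra.
From mathcomp Require Import all_classical all_reals all_analysis.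
Set Implicit Arguments. Unset Strict Implicit. Unset Printing Implicit Defensive.
Import Order.TTheory GRing.Theory Num.Theory.
Local Open Scope ring_scope.

Definition psi0 (R : realType) (b eta : R) : R :=
  (1 + eta `^ (b + 1)) `^ (b^-1) / (1 + eta) `^ ((b + 1) / b)
  + (b + 1) `^ ((b + 1) / b) / b * ((1 + eta `^ (b + 1))^-1 - (1 + eta)^-1).

Definition is_eta1 (R : realType) (b e : R) : Prop :=
  0 < e < 1 /\ e `^ b = (1 + b * (e + 1))^-1.

Definition is_max_on (R : realType) (f : R -> R) (a b M : R) : Prop :=
  (exists x, a <= x <= b /\ f x = M) /\ (forall x, a <= x <= b -> f x <= M).

(* Main.v *)
Require Import Defs.
From HB Require Import structures.
From mathcomp Require Import all_boot all_order all_algebra.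
From mathcomp Require Import all_classical all_reals all_analysis.
From mathcomp Require Import ring lra.
Import Order.TTheory GRing.Theory Num.Theory numFieldNormedType.Exports.
Local Open Scope ring_scope.
Section S.
Context {R : realType}.
Definition pp (c x : R) : R := (Num.max x 0) `^ c.

Lemma gt_nbhsl (a z : R) : z < a -> \forall x \near z, x < a.
Proof.
move=> za; exists (a - z) => /=; first by rewrite subr_gt0.
move=> u /= h; have := ler_norm (u - z); rewrite distrC => h2; lra.
Qed.

Lemma powR_cont (c a : R) : 0 < a -> {for a, continuous (fun x : R => x `^ c)}.
Proof.
move=> a0; apply: differentiable_continuous; apply/derivable1_diffP.
by apply: derivable_powR; rewrite in_itv /= a0.
Qed.

Lemma pp_cont (c : R) : 0 < c -> continuous (pp c).
Proof.
move=> c0 x.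
have [x0|x0|->] := ltgtP x 0.
- have xp : pp c x = 0 by rewrite /pp (max_r (ltW x0)) powR0 // gt_eqF.
  rewrite /continuous_at xp; apply: cvg_near_cst.
  near=> y; have y0 : y < 0 by near: y; exact: gt_nbhsl.
  by rewrite /pp (max_r (ltW y0)) powR0 // gt_eqF.
- have e : {near x, (fun y : R => y `^ c) =1 pp c}.
    apply: filterS (lt_nbhsr x0) => y y0.
    by rewrite /pp (max_l (ltW y0)).
  rewrite /continuous_at {2}/pp (max_l (ltW x0)).
  apply: cvg_trans (near_eq_cvg e) _.
  exact: (@powR_cont c x x0).
- apply/cvgrPdist_lt => e e0.
  have d0 : 0 < e `^ c^-1 by apply: powR_gt0.
  near=> y; have hy : `|y| < e `^ c^-1.
    by near: y; exists (e `^ c^-1) => // z /=; rewrite sub0r normrN.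
  rewrite /pp maxxx powR0 ?gt_eqF // sub0r normrN.
  rewrite ger0_norm ?powR_ge0 //.
  have [y0|y0] := leP y 0.
    by rewrite powR0 ?gt_eqF.
  rewrite gtr0_norm // in hy.
  have -> : e = (e `^ c^-1) `^ c by rewrite -powRrM mulVf ?gt_eqF // powRr1 // ltW.
  by apply: gt0_ltr_powR => //; rewrite ?nnegrE ?powR_ge0 ?ltW.
Unshelve. all: by end_near.
Qed.

Lemma pp_nneg (c x : R) : 0 <= x -> pp c x = x `^ c.
Proof. by move=> x0; rewrite /pp (max_l x0). Qed.

Lemma comp_cont (c r : R) x : 0 < c ->
  {for x, continuous (fun y => (1 + pp c y) `^ r)}.
Proof.
move=> c0.
apply: (@continuous_comp _ _ _ (fun y => 1 + pp c y) (fun z : R => z `^ r)).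
  by apply: continuousD; [exact: cvg_cst | exact: pp_cont].
apply: powR_cont; rewrite /pp; have := powR_ge0 (Num.max x 0) c; lra.
Qed.

Lemma inv_cont (c : R) x : 0 < c ->
  {for x, continuous (fun y => (1 + pp c y)^-1)}.
Proof.
move=> c0; apply: continuousV.
  by rewrite gt_eqF //; have := powR_ge0 (Num.max x 0) c; rewrite /pp; lra.
by apply: continuousD; [exact: cvg_cst | exact: pp_cont].
Qed.

Lemma key (p xi : R) : 1 < p -> 0 <= xi ->
  psi0 (-(1/p)) (xi `^ (1/(p-1)+1)) = psi0 (1/(p-1)) xi.
Proof.
move=> p1 xi0.
have p0 : p != 0 by rewrite gt_eqF //; lra.
have pm0 : p - 1 != 0 by rewrite gt_eqF //; lra.
set q := 1/(p-1) + 1.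
have b0 : 0 < 1/(p-1) by rewrite divr_gt0 //; lra.
have q0 : 0 < q by rewrite /q; lra.
have E1 : -(1/p) + 1 = q^-1 by rewrite /q; field; rewrite pm0 /= gt_eqF //; lra.
have E2 : (-(1/p))^-1 = -p by field.
have E3 : q^-1 / (-(1/p)) = -(p-1) by rewrite /q; field; rewrite pm0 /= gt_eqF //; lra.
have E4 : (1/(p-1))^-1 = p - 1 by field.
have E5 : q / (1/(p-1)) = p by rewrite /q; field.
rewrite /psi0 E1 E3 E2 E5 E4 -powRrM mulfV ?gt_eqF // powRr1 //.
set A := 1 + xi `^ q; set B := 1 + xi.
have A0 : 0 < A by rewrite /A; have := powR_ge0 xi q; lra.
have B0 : 0 < B by rewrite /B; lra.
rewrite !powRN -(powR_inv1 (ltW q0)) -powRrM.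
rewrite mulN1r powRN invrK.
have -> : (1/(p-1)+1) `^ p = q `^ (p - 1) * q.
  rewrite -/q; have -> : q `^ p = q `^ ((p-1)+1) by rewrite subrK.
  rewrite powRD ?powRr1 ?(ltW q0) //.
  by rewrite (gt_eqF q0) implybT.
have hA : A `^ (p-1) != 0 by rewrite gt_eqF // powR_gt0.
have hB : B `^ p != 0 by rewrite gt_eqF // powR_gt0.
have hK : q `^ (p-1) != 0 by rewrite gt_eqF // powR_gt0.
rewrite /q in hK *; field.
by rewrite (gt_eqF A0) (gt_eqF B0) pm0 hB hK.
Qed.

Lemma hmono (b x y : R) : 0 < b -> 0 < x -> x < y ->
  x `^ b * (1 + b * (x + 1)) < y `^ b * (1 + b * (y + 1)).
Proof.
move=> b0 x0 xy.
apply: ltr_pM; rewrite ?powR_ge0 //.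
- have : 0 < b * (x + 1) by apply: mulr_gt0; lra.
  lra.
- by apply: gt0_ltr_powR => //; rewrite nnegrE; lra.
- by rewrite ltrD2l ltr_pM2l // ltrD2r.
Qed.

Lemma root_rel (p e1 e2 : R) : 1 < p -> is_eta1 (1/(p-1)) e1 ->
  is_eta1 (-(1/p)) e2 -> e2 = e1 `^ (1/(p-1)+1).
Proof.
move=> p1 [/andP [e10 e11] he1] [/andP [e20 e21] he2].
have p0 : p != 0 by rewrite gt_eqF //; lra.
have pm0 : p - 1 != 0 by rewrite gt_eqF //; lra.
set b := 1/(p-1) in he1 *.
have b0 : 0 < b by rewrite divr_gt0 //; lra.
set q := b + 1.
have q0 : 0 < q by rewrite /q; lra.
set xi := e2 `^ q^-1.
have xi0 : 0 < xi by apply: powR_gt0.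
have xi1 : xi < 1.
  apply: (@lt_le_trans _ _ ((1:R) `^ q^-1)); last by rewrite powR1.
  apply: gt0_ltr_powR; rewrite ?invr_gt0 ?nnegrE //; lra.
have exi : e2 = xi `^ q by rewrite /xi -powRrM mulVf ?gt_eqF // powRr1 // ltW.
set t := xi `^ b.
have t0 : 0 < t by apply: powR_gt0.
have hq : xi `^ q = t * xi.
  by rewrite /q powRD ?powRr1 ?(ltW xi0) // implybE gt_eqF ?orbT.
have hb : e2 `^ (-(1/p)) = t^-1.
  rewrite exi -powRrM -powRN; congr (_ `^ _); rewrite /q /b; field.
  by rewrite pm0 p0.
rewrite hb exi hq in he2.
have ht : t = 1 + - (1 / p) * (t * xi + 1) by apply: invr_inj.
have H : t * p + t * xi = p - 1.
  by rewrite {1}ht; field.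
have hxi : xi `^ b * (1 + b * (xi + 1)) = 1.
  rewrite -/t; have -> : t * (1 + b * (xi + 1)) = (t * p + t * xi)/(p-1) by rewrite /b; field.
  by rewrite H divff.
have he : e1 `^ b * (1 + b * (e1 + 1)) = 1.
  rewrite he1 mulVf // gt_eqF //; have : 0 < b * (e1 + 1) by apply: mulr_gt0; lra.
  lra.
suff -> : e1 = xi by [].
have [l|l|//] := ltgtP e1 xi.
  by have := hmono _ _ _ b0 e10 l; rewrite he hxi ltxx.
by have := hmono _ _ _ b0 xi0 l; rewrite he hxi ltxx.
Qed.
End S.

Theorem corollary2p5 (R : realType) (p : R) (hp : 1 < p) (e1 e2 : R)
  (he1 : is_eta1 (1 / (p - 1)) e1) (he2 : is_eta1 (- (1 / p)) e2) :
  exists M : R,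
    is_max_on (psi0 (1 / (p - 1))) 0 e1 M /\ is_max_on (psi0 (- (1 / p))) 0 e2 M.
Proof.
have hroot := @root_rel _ p e1 e2 hp he1 he2.
case: he1 => /andP [e10 e11] _.
set b := 1/(p-1) in hroot *.
have b0 : 0 < b by rewrite divr_gt0 //; lra.
set q := b + 1 in hroot *.
have q0 : 0 < q by rewrite /q; lra.
pose F := fun x => (1 + pp q x) `^ (b^-1) / (1 + pp 1 x) `^ ((b+1)/b)
  + (b+1) `^ ((b+1)/b) / b * ((1 + pp q x)^-1 - (1 + pp 1 x)^-1).
have FE : forall x, 0 <= x -> F x = psi0 b x.
  by move=> x x0; rewrite /F /psi0 !pp_nneg // powRr1.
have hFc : continuous F.
  move=> x.
  pose f1 := fun x : R => (1 + pp q x) `^ (b^-1).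
  pose f2 := fun x : R => ((1 + pp 1 x) `^ ((b+1)/b))^-1.
  pose f3 := fun x : R => (b+1) `^ ((b+1)/b) / b.
  pose f4 := fun x : R => (1 + pp q x)^-1.
  pose f5 := fun x : R => (1 + pp 1 x)^-1.
  have c1 : {for x, continuous f1} by exact: comp_cont.
  have c2 : {for x, continuous f2}.
    apply: continuousV; last exact: comp_cont.
    by rewrite gt_eqF // powR_gt0 //; have := powR_ge0 (Num.max x 0) 1; rewrite /pp; lra.
  have c3 : {for x, continuous f3} by exact: cvg_cst.
  have c4 : {for x, continuous f4} by exact: inv_cont.
  have c5 : {for x, continuous f5} by exact: inv_cont.
  exact: (continuousD (continuousM c1 c2) (continuousM c3 (continuousB c4 c5))).
have [c cI cmax] := EVT_max (ltW e10) (continuous_subspaceT hFc).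
move: cI; rewrite in_itv /= => /andP [c0 ce].
exists (psi0 b c); split.
  split; first by exists c; split; rewrite ?c0 ?ce.
  move=> x /andP [x0 xe]; rewrite -!FE //; apply: cmax; by rewrite in_itv /= x0 xe.
have nn : forall z : R, 0 <= z -> z \in Num.nneg by move=> z; rewrite nnegrE.
rewrite /is_max_on; split.
  exists (powR c q). split; last by rewrite key.
  rewrite powR_ge0 hroot /=; apply: ge0_ler_powR; rewrite ?nn //; lra.
move=> eta /andP [eta0 etae].
set xi := eta `^ q^-1.
have exi : eta = xi `^ q by rewrite /xi -powRrM mulVf ?gt_eqF // powRr1.
rewrite exi key ?powR_ge0 // -(FE xi) ?powR_ge0 // -(FE c) //; apply: cmax.
rewrite in_itv /= powR_ge0 /=.
have -> : e1 = e2 `^ q^-1 by rewrite hroot -powRrM mulfV ?gt_eqF // powRr1 // ltW.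
apply: ge0_ler_powR; rewrite ?nn ?invr_ge0 //; try lra.
Qed.
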